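(* Consider an unreplicated completely randomized design ($N_q=1$ for all $q$, so $Q=N$) with $S(q,q)>0$ for all $q$, and a grouping $\{\langle g\rangle\}_{g=1}^G$. Then for each group, $\mathbb E\{\hat Y_{\langle g\rangle}\}=\overline Y_{\langle g\rangle}$, where $\overline Y_{\langle g\rangle}=|\langle g\rangle|^{-1}\sum_{q\in\langle g\rangle}\overline Y(q)$. If moreover Condition 5 holds, then for every $q$, with $\langle g\rangle$ the group containing $q$, $$\mathbb E\{\hat V_{\hat Y}(q,q)\}\ge S(q,q)+\Omega(q,q)+\mu_{\langle g\rangle}(\overline Y(q)-\overline Y_{\langle g\rangle})^2,$$ where $$\Omega(q,q)=\mu_{\langle g\rangle}|\langle g\rangle|^{-2}\Big(1-\frac{\varrho_{\langle g\rangle}}N-\frac{|\langle g\rangle|-1}N\Big)\sum_{q'\in\langle g\rangle,q'\neq q}S(q',q')\ \ge0.$$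
   Context: Randomization model with $N$ units and $Q$ treatment levels; unit $i$ has fixed real potential outcomes $Y_i(1),\dots,Y_i(Q)$. Unreplicated complete randomization: $N_q=1$ for all $q$ and the assignment is a uniformly random bijection between units and levels; $Y_q$ denotes the observed outcome of the unique unit assigned to level $q$. $\overline Y(q)=N^{-1}\sum_iY_i(q)$, $S(q,q')=(N-1)^{-1}\sum_i(Y_i(q)-\overline Y(q))(Y_i(q')-\overline Y(q'))$, and $S^\star(q,q')=S(q,q')/\sqrt{S(q,q)S(q',q')}$. Grouping: a fixed (data-independent) partition $[Q]=\bigcup_{g=1}^G\langle g\rangle$ into disjoint groups with $|\langle g\rangle|\ge2$. For each group, $\hat Y_{\langle g\rangle}=|\langle g\rangle|^{-1}\sum_{q\in\langle g\rangle}Y_q$, $\mu_{\langle g\rangle}=(1-2N^{-1})^{-1}(1-|\langle g\rangle|^{-1})^{-2}$, and for $q\in\langle g\rangle$, $\hat V_{\hat Y}(q,q)=\mu_{\langle g\rangle}(Y_q-\hat Y_{\langle g\rangle})^2$. $\varrho_{\langle g\rangle}$ is the largest eigenvalue of $(S^\star(q,q'))_{q,q'\in\langle g\rangle}$. Condition 5: $N-\varrho_{\langle g\rangle}-(|\langle g\rangle|-1)\ge0$ for all groups. *)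

(* Defs.v *)
From HB Require Import structures.
From mathcomp Require Import all_boot all_order all_algebra.
From mathcomp Require Import perm.
Set Implicit Arguments. Unset Strict Implicit. Unset Printing Implicit Defensive.
Import Order.TTheory GRing.Theory Num.Theory.
Local Open Scope ring_scope.

Section Design.
Variables (R : rcfType) (N : nat).
(* Y i q = potential outcome Y_i(q) of unit i under level q (Q = N levels). *)
Variable Y : 'I_N -> 'I_N -> R.

Definition Ybar (q : 'I_N) : R := N%:R^-1 * \sum_(i < N) Y i q.

Definition Scov (q q' : 'I_N) : R :=
  (N.-1)%:R^-1 * \sum_(i < N) (Y i q - Ybar q) * (Y i q' - Ybar q').

Definition Sstar (q q' : 'I_N) : R := Scov q q' / Num.sqrt (Scov q q * Scov q' q').

(* An assignment is a uniformly random bijection; s q is the unit assigned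
   to level q. Y_q is the observed outcome at level q. *)
Definition obs (s : {perm 'I_N}) (q : 'I_N) : R := Y (s q) q.

Definition Eperm (f : {perm 'I_N} -> R) : R :=
  #|{perm 'I_N}|%:R^-1 * \sum_(s : {perm 'I_N}) f s.

Definition Yhat_grp (A : {set 'I_N}) (s : {perm 'I_N}) : R :=
  #|A|%:R^-1 * \sum_(q in A) obs s q.

Definition Ybar_grp (A : {set 'I_N}) : R :=
  #|A|%:R^-1 * \sum_(q in A) Ybar q.

Definition mu_grp (A : {set 'I_N}) : R :=
  (1 - 2 / N%:R)^-1 * ((1 - #|A|%:R^-1) ^+ 2)^-1.

Definition Vhat (P : {set {set 'I_N}}) (s : {perm 'I_N}) (q : 'I_N) : R :=
  mu_grp (pblock P q) * (obs s q - Yhat_grp (pblock P q) s) ^+ 2.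

Definition Sstar_sub (A : {set 'I_N}) : 'M[R]_#|A| :=
  \matrix_(i, j) Sstar (@enum_val _ (mem A) i) (@enum_val _ (mem A) j).

Definition Omega (P : {set {set 'I_N}}) (rho : {set 'I_N} -> R) (q : 'I_N) : R :=
  let A := pblock P q in
  mu_grp A * (#|A|%:R ^+ 2)^-1 * (1 - rho A / N%:R - (#|A|%:R - 1) / N%:R)
  * \sum_(q' in A | q' != q) Scov q' q'.

End Design.

Definition largest_eigenvalue (R : realFieldType) (n : nat) (M : 'M[R]_n) (r : R) : Prop :=
  eigenvalue M r /\ (forall a, eigenvalue M a -> a <= r :> R) .

(* Main.v *)
Require Import Defs.
From HB Require Import structures.
From mathcomp Require Import all_boot all_order all_algebra.
From mathcomp Require Import perm.
From mathcomp Require Import spectral sesquilinear.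
From mathcomp.real_closed Require Import complex.
From mathcomp.algebra_tactics Require Import ring lra.
Import Order.TTheory GRing.Theory Num.Theory.
Local Open Scope ring_scope.
Set Implicit Arguments. Unset Strict Implicit. Unset Printing Implicit Defensive.

Lemma final_alg (R : rcfType) (n m S U T Sig rho B : R) : 2 < n -> 2 <= m ->
  T <= rho * Sig -> 0 <= (m - 1) * S + 2 * U + Sig ->
  S + (1 - 2 / n)^-1 * ((1 - m^-1) ^+ 2)^-1 * (m ^+ 2)^-1 * (1 - rho / n - (m - 1) / n) * Sig
   + (1 - 2 / n)^-1 * ((1 - m^-1) ^+ 2)^-1 * B ^+ 2 <=
  (1 - 2 / n)^-1 * ((1 - m^-1) ^+ 2)^-1 * (B ^+ 2 + ((1 - m^-1) ^+ 2 * S + Sig / m ^+ 2)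
    - ((1 - m^-1) ^+ 2 * S - 2 * (1 - m^-1) * m^-1 * U + T / m ^+ 2) / n).
Proof.
move=> n2 m2 HT HU.
have n0 : n != 0 by apply/eqP; lra.
have m0 : m != 0 by apply/eqP; lra.
have n20 : n - 2 != 0 by apply/eqP; lra.
have m10 : m - 1 != 0 by apply/eqP; lra.
rewrite -subr_ge0.
set L := _ - _.
have -> : L = (n - 2)^-1 * ((m - 1) ^+ 2)^-1 * ((m - 1) * ((m - 1) * S + 2 * U + Sig) + (rho * Sig - T)).
  by rewrite /L; field; rewrite m10 n20 m0 n0.
apply: mulr_ge0; first apply: mulr_ge0.
- by rewrite invr_ge0; lra.
- by rewrite invr_ge0 sqr_ge0.
apply: addr_ge0; last by lra.
by apply: mulr_ge0 => //; lra.
Qed.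

Section Ray.
Variable R : rcfType.
Local Notation C := (R[i]).
Local Notation f := (real_complex R).

Lemma fC_real (x : R) : f x \is Num.real.
Proof. by rewrite complex_real. Qed.

Lemma rayleigh n (M : 'M[R]_n) (r : R) :
  M^T = M -> (forall a, eigenvalue M a -> a <= r) ->
  forall v : 'rV[R]_n, (v *m M *m v^T) 0 0 <= r * (v *m v^T) 0 0.
Proof.
move=> MT Hr v.
pose Mc : 'M[C]_n := map_mx f M.
have Mcsym : Mc \is symmetricmx.
  by apply/is_hermitianmxP; rewrite expr0 scale1r map_mx_id // /Mc map_trmx MT.
have Mcreal : Mc \is a mxOver Num.real.
  by apply/mxOverP => i j; rewrite mxE fC_real.
have Mcherm := realsym_hermsym Mcsym Mcreal.
have /orthomx_spectralP HP := hermitian_normalmx Mcherm.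
have Dreal := hermitian_spectral_diag_real Mcherm.
set P := spectralmx Mc in HP; set D := spectral_diag Mc in HP Dreal.
have PU : P \is unitarymx := spectral_unitarymx Mc.
have Punit : P \in unitmx := spectral_unit Mc.
have PtP : (P ^t* )%sesqui *m P = 1%:M by rewrite -invmx_unitary // mulVmx.
have Dle : forall i, D 0 i <= f r.
  move=> i; have /complex_realP [k Dk] : D 0 i \is Num.real by apply: (mxOverP Dreal).
  rewrite Dk lecR; apply: Hr.
  rewrite eigenvalue_root_char -(fmorph_root f) map_char_poly -/Mc.
  suff H : root (char_poly Mc) (D 0 i) by move: H; rewrite Dk.
  rewrite -eigenvalue_root_char; apply/eigenvalueP; exists (row i P).
    rewrite -row_mul HP !mulmxA mulmxV // mul1mx mul_diag_mx.
    by apply/rowP => j; rewrite !mxE.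
  rewrite rowE mulmx_free_eq0 ?row_free_unit //.
  apply/eqP => /matrixP /(_ 0 i); rewrite !mxE !eqxx /=.
  by move/eqP; rewrite oner_eq0.
pose vc := map_mx f v.
have E1 : f ((v *m M *m v^T) 0 0) = (vc *m Mc *m vc^T) 0 0.
  by rewrite /vc /Mc map_trmx -!map_mxM [RHS]mxE.
have E2 : f ((v *m v^T) 0 0) = (vc *m vc^T) 0 0.
  by rewrite /vc map_trmx -!map_mxM [RHS]mxE.
rewrite -lecR rmorphM /= E1 E2.
pose w := P *m vc^T.
have Ew : vc *m (P ^t* )%sesqui = (w ^t* )%sesqui.
  rewrite /w trmx_mul trmxK map_mxM; congr (_ *m _).
  rewrite /vc -map_mx_comp; apply/matrixP => i j; rewrite !mxE /=.
  by rewrite conj_Creal // fC_real.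
have -> : vc *m Mc *m vc^T = (w ^t* )%sesqui *m diag_mx D *m w.
  by rewrite HP invmx_unitary // /w -Ew !mulmxA.
have -> : vc *m vc^T = (w ^t* )%sesqui *m w.
  by rewrite /w -Ew !mulmxA -(mulmxA vc) PtP mulmx1.
rewrite !mxE mulr_sumr; apply: ler_sum => j _.
rewrite mul_mx_diag !mxE.
set x := \sum_j0 _.
rewrite (mulrC _ (D 0 j)) -mulrA ler_wpM2r //.
by rewrite mulrC mul_conjC_ge0.
Qed.
End Ray.

Section Prob.
Variables (R : rcfType) (N : nat).

Lemma sum_perm_mul (t : {perm 'I_N}) (H : {perm 'I_N} -> R) :
  \sum_s H (t * s)%g = \sum_s H s.
Proof. by rewrite [RHS](reindex_inj (mulgI t)). Qed.

Lemma perm_shift1 (q q' : 'I_N) (F : 'I_N -> R) :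
  \sum_(s : {perm 'I_N}) F (s q) = \sum_(s : {perm 'I_N}) F (s q').
Proof.
rewrite -(sum_perm_mul (tperm q q') (fun s => F (s q'))).
by apply: eq_bigr => s _; rewrite permM tpermR.
Qed.

Lemma sum_perm1 (q : 'I_N) (F : 'I_N -> R) :
  N%:R * \sum_(s : {perm 'I_N}) F (s q) = #|{perm 'I_N}|%:R * \sum_i F i.
Proof.
have -> : N%:R * \sum_(s : {perm 'I_N}) F (s q) = \sum_(q' < N) \sum_(s : {perm 'I_N}) F (s q').
  rewrite [RHS](eq_bigr (fun _ => \sum_(s : {perm 'I_N}) F (s q))); last by move=> q' _; apply: perm_shift1.
  by rewrite sumr_const card_ord mulr_natl.
rewrite exchange_big /=.
rewrite (eq_bigr (fun _ => \sum_i F i)); last first.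
  by move=> s _; rewrite [RHS](reindex_inj (@perm_inj _ s)).
by rewrite sumr_const mulr_natl.
Qed.

Lemma perm_pair (a b c d : 'I_N) : a != b -> c != d ->
  exists t : {perm 'I_N}, t c = a /\ t d = b.
Proof.
move=> ab cd.
pose t1 := tperm c a; pose e := t1 d; pose t2 := tperm e b.
have ea : e != a.
  by rewrite /e /t1 -{2}(tpermL c a) (inj_eq (@perm_inj _ _)) eq_sym.
exists (t1 * t2)%g; rewrite !permM /t1 tpermL -/t1 -/e; split.
  by rewrite /t2 tpermD // eq_sym.
by rewrite /t2 tpermL.
Qed.

Lemma perm_shift2 (q q' p p' : 'I_N) (G : 'I_N -> 'I_N -> R) :
  q != q' -> p != p' ->
  \sum_(s : {perm 'I_N}) G (s q) (s q') = \sum_(s : {perm 'I_N}) G (s p) (s p').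
Proof.
move=> qq pp; have [t [tp tp']] := perm_pair qq pp.
rewrite -(sum_perm_mul t (fun s => G (s p) (s p'))).
by apply: eq_bigr => s _; rewrite !permM tp tp'.
Qed.

Lemma sum_perm2 (q q' : 'I_N) (G : 'I_N -> 'I_N -> R) : q != q' ->
  N%:R * (N.-1)%:R * \sum_(s : {perm 'I_N}) G (s q) (s q') =
  #|{perm 'I_N}|%:R * \sum_i \sum_(l | l != i) G i l.
Proof.
move=> qq.
have -> : N%:R * (N.-1)%:R * \sum_(s : {perm 'I_N}) G (s q) (s q') =
   \sum_(p < N) \sum_(p' | p' != p) \sum_(s : {perm 'I_N}) G (s p) (s p').
  rewrite [RHS](eq_bigr (fun _ => (N.-1)%:R * \sum_(s : {perm 'I_N}) G (s q) (s q'))).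
    by rewrite sumr_const card_ord -mulrA mulr_natl.
  move=> p _; rewrite [LHS](eq_bigr (fun _ => \sum_(s : {perm 'I_N}) G (s q) (s q'))).
    by rewrite sumr_const cardC1 card_ord mulr_natl.
  by move=> p' pp'; apply: perm_shift2; rewrite // eq_sym.
rewrite (eq_bigr (fun p => \sum_(s : {perm 'I_N}) \sum_(p' | p' != p) G (s p) (s p'))); last first.
  by move=> p _; rewrite exchange_big.
rewrite exchange_big /= (eq_bigr (fun _ => \sum_i \sum_(l | l != i) G i l)).
  by rewrite sumr_const mulr_natl.
move=> s _.
rewrite [RHS](reindex_inj (@perm_inj _ s)) /=.
apply: eq_bigr => p _.
rewrite [RHS](reindex_inj (@perm_inj _ s)) /=.
by apply: eq_bigl => p'; rewrite (inj_eq (@perm_inj _ s)).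
Qed.

Lemma card_perm_neq0 : #|{perm 'I_N}|%:R != 0 :> R.
Proof. by rewrite pnatr_eq0 -lt0n; apply/card_gt0P; exists 1%g. Qed.

Lemma Eperm_sum (I : finType) (A : pred I) (F : I -> {perm 'I_N} -> R) :
  Eperm (fun s => \sum_(j in A) F j s) = \sum_(j in A) Eperm (F j).
Proof. by rewrite /Eperm exchange_big mulr_sumr. Qed.

Lemma EpermZ (c : R) (f : {perm 'I_N} -> R) :
  Eperm (fun s => c * f s) = c * Eperm f.
Proof. by rewrite /Eperm -mulr_sumr mulrCA. Qed.

Lemma EpermD (f g : {perm 'I_N} -> R) :
  Eperm (fun s => f s + g s) = Eperm f + Eperm g.
Proof. by rewrite /Eperm big_split mulrDr. Qed.

Lemma Eperm_ext (f g : {perm 'I_N} -> R) : (forall s, f s = g s) -> Eperm f = Eperm g.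
Proof. by move=> fg; rewrite /Eperm; congr (_ * _); apply: eq_bigr => s _. Qed.

Variable Y : 'I_N -> 'I_N -> R.
Definition T j := \sum_i Y i j.
Definition Pr j k := \sum_i Y i j * Y i k.

Hypothesis N0 : (0 < N)%N.
Lemma N_neq0 : N%:R != 0 :> R.
Proof. by rewrite pnatr_eq0 -lt0n. Qed.

Lemma Scov_alt j k : Scov Y j k = (N.-1)%:R^-1 * (Pr j k - T j * T k / N%:R).
Proof.
rewrite /Scov /Ybar /Pr /T; congr (_ * _).
rewrite (eq_bigr (fun i => Y i j * Y i k - Y i j * (N%:R^-1 * \sum_i0 Y i0 k)
   - (N%:R^-1 * \sum_i0 Y i0 j) * Y i k
   + (N%:R^-1 * \sum_i0 Y i0 j) * (N%:R^-1 * \sum_i0 Y i0 k))); last first.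
  by move=> i _; ring.
rewrite !big_split /= !sumrN -!mulr_suml sumr_const card_ord -!mulr_sumr -mulr_natl.
by field; exact: N_neq0.
Qed.


Lemma Eobs1 q : Eperm (fun s => obs Y s q) = Ybar Y q.
Proof.
have H := sum_perm1 q (fun i => Y i q).
rewrite /Eperm /obs /Ybar.
have -> : \sum_(s : {perm 'I_N}) Y (s q) q =
   #|{perm 'I_N}|%:R * (\sum_i Y i q) / N%:R.
  by rewrite -H; field; exact: N_neq0.
by field; rewrite card_perm_neq0 N_neq0.
Qed.

Hypothesis N2 : (1 < N)%N.
Lemma Nm1_neq0 : (N.-1)%:R != 0 :> R.
Proof. by rewrite pnatr_eq0 -lt0n -ltnS prednK. Qed.
Lemma Nm1E : (N.-1)%:R = N%:R - 1 :> R.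
Proof. by rewrite -[in RHS](prednK N0) -natr1 addrK. Qed.

Lemma Eobs2 j k : Eperm (fun s => obs Y s j * obs Y s k) =
  Ybar Y j * Ybar Y k + (j == k)%:R * Scov Y j k - Scov Y j k / N%:R.
Proof.
have KN := card_perm_neq0; have NN := N_neq0; have N1 := Nm1_neq0.
rewrite Scov_alt /Ybar -/(T j) -/(T k) /Eperm /obs.
have [<-|jk] := eqVneq j k.
  have H := sum_perm1 j (fun i => Y i j * Y i j).
  have -> : \sum_(s : {perm 'I_N}) Y (s j) j * Y (s j) j =
     #|{perm 'I_N}|%:R * (Pr j j) / N%:R.
    by rewrite /Pr -H; field.
  by rewrite mul1r Nm1E; rewrite Nm1E in N1; field; rewrite KN NN N1.
have H := sum_perm2 (fun a b => Y a j * Y b k) jk.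
have E : \sum_i \sum_(l | l != i) Y i j * Y l k = T j * T k - Pr j k.
  rewrite /T /Pr mulr_suml -sumrB; apply: eq_bigr => i _.
  by rewrite mulr_sumr [X in _ = X - _](bigD1 i) //= addrC addrK.
rewrite E in H.
have -> : \sum_(s : {perm 'I_N}) Y (s j) j * Y (s k) k =
   #|{perm 'I_N}|%:R * (T j * T k - Pr j k) / (N%:R * (N.-1)%:R).
  by rewrite -H; field; rewrite NN N1.
by rewrite mul0r addr0 Nm1E; rewrite Nm1E in N1; field; rewrite KN NN N1.
Qed.


Lemma Scov_sym j k : Scov Y j k = Scov Y k j.
Proof. by rewrite /Scov; congr (_ * _); apply: eq_bigr => i _; rewrite mulrC. Qed.

Lemma Scov_pair j k : 0 <= Scov Y j j + 2 * Scov Y j k + Scov Y k k.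
Proof.
have -> : Scov Y j j + 2 * Scov Y j k + Scov Y k k =
  (N.-1)%:R^-1 * \sum_i ((Y i j - Ybar Y j) + (Y i k - Ybar Y k)) ^+ 2.
  rewrite /Scov.
  rewrite [X in _ = _ * X](eq_bigr (fun i => (Y i j - Ybar Y j) * (Y i j - Ybar Y j) + 2 * ((Y i j - Ybar Y j) * (Y i k - Ybar Y k)) + (Y i k - Ybar Y k) * (Y i k - Ybar Y k))); last by move=> i _; ring.
  rewrite !big_split /= -mulr_sumr; ring.
by apply: mulr_ge0; [rewrite invr_ge0 ler0n | apply: sumr_ge0 => i _; apply: sqr_ge0].
Qed.

Section Group.
Variables (A : {set 'I_N}) (q : 'I_N).
Hypothesis qA : q \in A.
Let m := #|A|.
Hypothesis m2 : (2 <= m)%N.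
Definition cc (j : 'I_N) : R := (j == q)%:R - m%:R^-1.

Lemma m_neq0 : m%:R != 0 :> R.
Proof. by rewrite pnatr_eq0 -lt0n (leq_trans _ m2). Qed.

Lemma Zdecomp s : obs Y s q - Yhat_grp Y A s = \sum_(j in A) cc j * obs Y s j.
Proof.
rewrite /cc /Yhat_grp [RHS](eq_bigr (fun j => (j == q)%:R * obs Y s j - m%:R^-1 * obs Y s j)); last first.
  by move=> j _; rewrite mulrBl.
have H : \sum_(i in A) (i == q)%:R * obs Y s i = obs Y s q.
  rewrite (bigD1 q) //= eqxx mul1r big1 ?addr0 //.
  by move=> j /andP [_ /negbTE ->]; rewrite mul0r.
by rewrite sumrB -mulr_sumr H.
Qed.

Lemma EZ2 : Eperm (fun s => (obs Y s q - Yhat_grp Y A s) ^+ 2) =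
  \sum_(j in A) \sum_(k in A) cc j * cc k * Eperm (fun s => obs Y s j * obs Y s k).
Proof.
rewrite (Eperm_ext (g := fun s => \sum_(j in A) \sum_(k in A) cc j * cc k * (obs Y s j * obs Y s k))); last first.
  move=> s; rewrite Zdecomp expr2 mulr_suml; apply: eq_bigr => j _.
  rewrite mulr_sumr; apply: eq_bigr => k _; ring.
rewrite Eperm_sum; apply: eq_bigr => j _; rewrite Eperm_sum; apply: eq_bigr => k _.
by rewrite EpermZ.
Qed.


Definition BB := \sum_(j in A) cc j * Ybar Y j.
Definition D2 := \sum_(j in A) cc j ^+ 2 * Scov Y j j.
Definition QQ := \sum_(j in A) \sum_(k in A) cc j * cc k * Scov Y j k.

Lemma EZ2' : Eperm (fun s => (obs Y s q - Yhat_grp Y A s) ^+ 2) =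
  BB ^+ 2 + D2 - QQ / N%:R.
Proof.
rewrite EZ2 /BB /D2 /QQ.
rewrite (eq_bigr (fun j => (cc j * Ybar Y j) * BB + cc j ^+ 2 * Scov Y j j
   - (\sum_(k in A) cc j * cc k * Scov Y j k) / N%:R)); last first.
  move=> j jA.
  rewrite (eq_bigr (fun k => (cc j * Ybar Y j) * (cc k * Ybar Y k)
     + (j == k)%:R * (cc j * cc k * Scov Y j k) - cc j * cc k * Scov Y j k / N%:R)); last first.
    by move=> k _; rewrite Eobs2; ring.
  rewrite sumrB big_split /= -mulr_sumr -mulr_suml; congr (_ + _ - _).
  rewrite (bigD1 j) //= eqxx mul1r big1 ?addr0; first by rewrite expr2.
  by move=> k /andP [_]; rewrite eq_sym => /negbTE ->; rewrite mul0r.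
by rewrite sumrB big_split /= -mulr_suml -mulr_suml expr2.
Qed.

Lemma cc_neq k : k != q -> cc k = - m%:R^-1.
Proof. by move=> /negbTE kq; rewrite /cc kq sub0r. Qed.

Lemma sumcc (G : 'I_N -> R) : \sum_(k in A) cc k * G k =
  (1 - m%:R^-1) * G q - m%:R^-1 * \sum_(k in A | k != q) G k.
Proof.
rewrite (bigD1 q) //= /cc eqxx; congr (_ + _).
rewrite mulr_sumr -sumrN; apply: eq_bigr => k /andP [_ /negbTE ->].
by rewrite sub0r mulNr.
Qed.

Definition Sig := \sum_(j in A | j != q) Scov Y j j.
Definition UU := \sum_(k in A | k != q) Scov Y q k.
Definition TT := \sum_(j in A | j != q) \sum_(k in A | k != q) Scov Y j k.

Lemma BBE : BB = Ybar Y q - Ybar_grp Y A.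
Proof.
rewrite /BB /Ybar_grp /cc.
rewrite (eq_bigr (fun j => (j == q)%:R * Ybar Y j - m%:R^-1 * Ybar Y j)); last first.
  by move=> j _; rewrite mulrBl.
have H : \sum_(i in A) (i == q)%:R * Ybar Y i = Ybar Y q.
  rewrite (bigD1 q) //= eqxx mul1r big1 ?addr0 //.
  by move=> j /andP [_ /negbTE ->]; rewrite mul0r.
by rewrite sumrB -mulr_sumr H.
Qed.

Lemma D2E : D2 = (1 - m%:R^-1) ^+ 2 * Scov Y q q + Sig / m%:R ^+ 2.
Proof.
rewrite /D2 (bigD1 q) //= /cc eqxx; congr (_ + _).
rewrite /Sig mulr_suml; apply: eq_bigr => k /andP [_ /negbTE ->].
by rewrite sub0r sqrrN exprVn mulrC.
Qed.

Lemma QQE : QQ = (1 - m%:R^-1) ^+ 2 * Scov Y q q - 2 * (1 - m%:R^-1) * m%:R^-1 * UU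
  + TT / m%:R ^+ 2.
Proof.
rewrite /QQ (eq_bigr (fun j => cc j * (\sum_(k in A) cc k * Scov Y j k))); last first.
  by move=> j _; rewrite mulr_sumr; apply: eq_bigr => k _; rewrite mulrA.
rewrite (eq_bigr (fun j => cc j * ((1 - m%:R^-1) * Scov Y j q - m%:R^-1 * \sum_(k in A | k != q) Scov Y j k))); last first.
  by move=> j _; rewrite sumcc.
rewrite sumcc.
have -> : \sum_(j in A | j != q) ((1 - m%:R^-1) * Scov Y j q -
    m%:R^-1 * \sum_(k in A | k != q) Scov Y j k) = (1 - m%:R^-1) * UU - m%:R^-1 * TT.
  rewrite sumrB /UU /TT mulr_sumr [in RHS]mulr_sumr; congr (_ - _).
  by apply: eq_bigr => j _; rewrite Scov_sym.
rewrite -/UU; field; exact: m_neq0.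
Qed.

Lemma card_rest : \sum_(k in A | k != q) (1 : R) = m%:R - 1.
Proof.
have : \sum_(k in A) (1 : R) = m%:R by rewrite sumr_const.
by rewrite (bigD1 q) //= => <-; rewrite addrC addrK.
Qed.

Lemma cross_bound : 0 <= (m%:R - 1) * Scov Y q q + 2 * UU + Sig.
Proof.
have : 0 <= \sum_(k in A | k != q) (Scov Y q q + 2 * Scov Y q k + Scov Y k k).
  by apply: sumr_ge0 => k _; apply: Scov_pair.
have E1 : \sum_(k in A | k != q) Scov Y q q = (m%:R - 1) * Scov Y q q.
  by rewrite -card_rest mulr_suml; apply: eq_bigr => k _; rewrite mul1r.
have E2 : \sum_(k in A | k != q) 2 * Scov Y q k = 2 * UU by rewrite /UU mulr_sumr.
by rewrite !big_split /= E1 E2.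
Qed.

Hypothesis Spos : forall j, 0 < Scov Y j j.

Lemma ray_bound (rho : R) :
  (forall a, eigenvalue (Sstar_sub Y A) a -> a <= rho) -> TT <= rho * Sig.
Proof.
move=> Hr.
pose M := Sstar_sub Y A.
have MT : M^T = M.
  apply/matrixP => i j; rewrite !mxE /Sstar Scov_sym.
  by rewrite (mulrC (Scov Y (enum_val i) (enum_val i))).
pose x j := (j != q)%:R * Num.sqrt (Scov Y j j).
pose v := \row_(i < #|A|) x (enum_val i).
have := rayleigh MT Hr v.
have Ex : forall j k, x j * Sstar Y j k * x k =
    if j != q then (if k != q then Scov Y j k else 0) else 0.
  move=> j k; rewrite /x /Sstar.
  have Sj := Spos j; have Sk := Spos k.
  rewrite sqrtrM ?ltW //.
  have sj : Num.sqrt (Scov Y j j) != 0 by rewrite gt_eqF // sqrtr_gt0.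
  have sk : Num.sqrt (Scov Y k k) != 0 by rewrite gt_eqF // sqrtr_gt0.
  case: (j != q); case: (k != q) => /=; rewrite ?mul0r ?mulr0 ?mul1r ?mulr1 ?mul0r //.
  by field; rewrite sj sk.
have -> : (v *m M *m v^T) 0 0 = TT.
  have -> : (v *m M *m v^T) 0 0 = \sum_(k in A) \sum_(j in A) x j * Sstar Y j k * x k.
    rewrite [RHS](big_enum_val (fun k => \sum_(j in A) x j * Sstar Y j k * x k)) /=.
    rewrite !mxE; apply: eq_bigr => l _.
    rewrite (big_enum_val (fun j => x j * Sstar Y j (enum_val l) * x (enum_val l))) /=.
    rewrite !mxE mulr_suml; apply: eq_bigr => i _; rewrite !mxE.
    by [].
  rewrite exchange_big /TT big_mkcondr /=; apply: eq_bigr => j _.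
  rewrite (eq_bigr _ (fun k _ => Ex j k)).
  case: (j != q) => /=; last by rewrite big1.
  by rewrite big_mkcondr.
suff -> : (v *m v^T) 0 0 = Sig by [].
rewrite mxE [RHS](_ : _ = \sum_(j in A) x j * x j).
  by rewrite (big_enum_val (fun j => x j * x j)) /=; apply: eq_bigr => i _; rewrite !mxE.
rewrite /Sig big_mkcondr /=; apply: eq_bigr => j _.
rewrite /x; case: (j != q) => /=; last by rewrite !mul0r.
by rewrite !mul1r -expr2 sqr_sqrtr // ltW.
Qed.

End Group.
End Prob.

Unset Implicit Arguments.
Theorem lemma2 (R : rcfType) (N : nat) (Y : 'I_N -> 'I_N -> R)
  (P : {set {set 'I_N}}) (rho : {set 'I_N} -> R) :
  (2 < N)%N ->
  (forall q : 'I_N, 0 < Scov Y q q) ->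
  partition P [set: 'I_N] ->
  (forall A, A \in P -> (2 <= #|A|)%N) ->
  (forall A, A \in P -> largest_eigenvalue (Sstar_sub Y A) (rho A)) ->
  (forall A, A \in P -> Eperm (Yhat_grp Y A) = Ybar_grp Y A) /\
  ((forall A, A \in P -> 0 <= N%:R - rho A - (#|A|%:R - 1)) ->
   forall q : 'I_N,
     0 <= Omega Y P rho q /\
     Eperm (fun s => Vhat Y P s q) >=
       Scov Y q q + Omega Y P rho q
       + @mu_grp R N (pblock P q) * (Ybar Y q - Ybar_grp Y (pblock P q)) ^+ 2).
Proof.
move=> N2 Spos Ppart Pcard Prho.
have N0 : (0 < N)%N by apply: ltn_trans N2.
have N1 : (1 < N)%N by apply: ltn_trans N2.
split.
  move=> A AP; rewrite /Yhat_grp /Ybar_grp EpermZ Eperm_sum; congr (_ * _).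
  by apply: eq_bigr => q _; rewrite Eobs1.
move=> C5 q; set A := pblock P q.
have cov : cover P = setT by case/and3P: Ppart => /eqP.
have qA : q \in A by rewrite /A mem_pblock cov inE.
have AP : A \in P by rewrite /A pblock_mem // cov inE.
have m2 := Pcard A AP.
have Hr := (Prho A AP).2.
have c5 := C5 A AP.
have Nr : 2 < N%:R :> R by rewrite ltr_nat.
have mr : 2 <= #|A|%:R :> R by rewrite ler_nat.
have Hm0 : (1 - 2 / N%:R) > 0 :> R.
  rewrite subr_gt0 ltr_pdivrMr; last by lra.
  by rewrite mul1r.
split.
  rewrite /Omega -/A /mu_grp.
  apply: mulr_ge0; last by apply: sumr_ge0 => j _; apply: ltW.
  apply: mulr_ge0; first apply: mulr_ge0; first apply: mulr_ge0.
  - by rewrite invr_ge0 ltW.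
  - by rewrite invr_ge0 sqr_ge0.
  - by rewrite invr_ge0 sqr_ge0.
  have -> : 1 - rho A / N%:R - (#|A|%:R - 1) / N%:R = (N%:R - rho A - (#|A|%:R - 1)) / N%:R.
    by field; apply/eqP; lra.
  by apply: divr_ge0 => //; lra.
rewrite /Vhat -/A EpermZ EZ2' // (BBE _ qA) (D2E _ qA) (QQE _ qA m2).
rewrite /Omega -/A /mu_grp.
apply: final_alg => //.
  by apply: ray_bound.
exact: cross_bound.
Qed.
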